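(* Let $G=(V,E)$ be a locally finite connected simple undirected graph with a distinguished root vertex $e\in V$, and let $k\ge 1$ be an integer such that $\sigma:=|V_e^{[k]}|\ge 1$, where $V_e^{[k]}=\{x\in V:\partial_G(x,e)=k\}$ is the set of neighbours of $e$ in the distance $k$-graph $G^{[k]}$. For $N\ge 1$ let $G^{\star N}$ be the $N$-fold star power of $G$ (rooted at $e$), let $G^{[\star N,k]}$ be the distance $k$-graph of $G^{\star N}$, and let $A^{[\star N,k]}$ be its adjacency matrix. Then, as $N\to\infty$, the distribution of $(N\sigma)^{-1/2}A^{[\star N,k]}$ with respect to the vacuum state at $e$ converges weakly to the centered Bernoulli distribution $\frac12\delta_{-1}+\frac12\delta_{1}$.
   Context: All graphs are simple (no loops) and undirected; $\partial_H(x,y)$ denotes the graph distance in a graph $H$. For a graph $H=(W,F)$ and $k\ge1$, the distance $k$-graph $H^{[k]}$ is the graph on $W$ whose edges are the pairs $(x,y)$ with $\partial_H(x,y)=k$. For rooted graphs $(G_1,o_1)$, $(G_2,o_2)$ the star product $G_1\star G_2$ has vertex set $V_1\times V_2$, with $(v_1,w_1)\sim(v_2,w_2)$ iff either $v_1=v_2=o_1$ and $w_1\sim w_2$ in $G_2$, or $v_1\sim v_2$ in $G_1$ and $w_1=w_2=o_2$; it is rooted at $(o_1,o_2)$. Equivalently, (the connected component of the root of) the $N$-fold star power $G^{\star N}=G\star\cdots\star G$ is the graph obtained by taking $N$ disjoint copies of $G$ and identifying their roots into a single vertex, again denoted $e$. The distribution of a (symmetric) adjacency matrix $A$ with respect to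 the vacuum state at the vertex $e$ is the probability measure $\mu$ on $\mathbb{R}$ with $\int x^m\,\mu(dx)=(A^m)_{ee}$ for all $m\ge0$, i.e. the $m$-th moment is the number of walks of length $m$ starting and ending at $e$. *)

(* Defs.v *)
From HB Require Import structures.
From mathcomp Require Import all_boot all_order all_algebra.
From mathcomp Require Import all_classical all_reals all_analysis.
Set Implicit Arguments. Unset Strict Implicit. Unset Printing Implicit Defensive.
Import Order.TTheory GRing.Theory Num.Theory.
Local Open Scope classical_set_scope.
Local Open Scope ring_scope.

Definition is_dist (T : eqType) (r : rel T) (x y : T) (n : nat) : Prop :=
  (exists p : seq T, [/\ path r x p, last x p = y & size p = n]) /\
  (forall p : seq T, path r x p -> last x p = y -> (n <= size p)%N).

Definition distk (T : eqType) (r : rel T) (k : nat) (x y : T) : Prop :=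
  is_dist r x y k.

(* Vertex set of the N-fold star power of (V, e): the common root [None],
   and for each copy i < N the non-root vertices [Some (i, x)], x != e. *)
Definition starV (V : eqType) (e : V) (N : nat) : Type :=
  option ('I_N * {x : V | x != e}).

Definition star_adj (V : choiceType) (adj : rel V) (e : V) (N : nat)
  : rel (starV e N) :=
  fun u v =>
    match u, v with
    | None, None => false
    | None, Some (_, y) => adj e (val y)
    | Some (_, x), None => adj (val x) e
    | Some (i, x), Some (j, y) => (i == j) && adj (val x) (val y)
    end.

(* Number of walks of length m from x to o in the graph with edge relation r:
   the entry (A^m)_{x o} of its adjacency matrix (r locally finite). *)
Fixpoint nwalks (R : realType) (T : choiceType) (r : T -> T -> Prop) (o : T)
  (m : nat) (x : T) {struct m} : R :=
  match m with
  | 0%N => (x == o)%:R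
  | m'.+1 => \sum_(y \in [set y | r x y]) nwalks R r o m' y
  end.

(* Main.v *)
Require Import Defs.
From HB Require Import structures.
From mathcomp Require Import all_boot all_order all_algebra.
From mathcomp Require Import all_classical all_reals all_analysis.
From mathcomp Require Import lra ring.
Import Order.TTheory GRing.Theory Num.Theory.
Import numFieldNormedType.Exports.
Local Open Scope classical_set_scope.
Local Open Scope ring_scope.

Set Implicit Arguments. Unset Strict Implicit. Unset Printing Implicit Defensive.

Definition sproj (V : choiceType) (e : V) (N : nat) (v : starV e N) : V :=
  match v with None => e | Some (_, x) => val x end.

Definition slift (V : choiceType) (e : V) (N : nat) (i : 'I_N) (x : V)
  : starV e N := omap (fun w => (i, w)) (insub x).

Lemma sproj_lift (V : choiceType) (e : V) (N : nat) (i : 'I_N) (x : V) :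
  sproj (slift e i x) = x.
Proof.
rewrite /slift; case: insubP => [w _ <-|] //=.
by rewrite negbK => /eqP.
Qed.

Lemma slift_inj (V : choiceType) (e : V) (N : nat) (i : 'I_N) :
  injective (@slift V e N i).
Proof. by move=> x y h; rewrite -(sproj_lift e i x) h sproj_lift. Qed.

Lemma slift_Some (V : choiceType) (e : V) (N : nat) (i : 'I_N) w :
  slift e i (val w) = Some (i, w).
Proof. by rewrite /slift valK. Qed.

Lemma slift_e (V : choiceType) (e : V) (N : nat) (i : 'I_N) :
  slift e i e = None.
Proof. by rewrite /slift insubF // eqxx. Qed.

Lemma star_adj_lift (V : choiceType) (adj : rel V) (e : V) (N : nat)
  (adj_irr : irreflexive adj) (i : 'I_N) (x y : V) :
  @star_adj _ adj e N (slift e i x) (slift e i y) = adj x y.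
Proof.
rewrite /slift; case: insubP => [w _ <-|]; case: insubP => [w' _ <-|] //=.
- by rewrite eqxx.
- by rewrite negbK => /eqP ->.
- by rewrite negbK => /eqP ->.
- by rewrite !negbK => /eqP -> /eqP ->; rewrite adj_irr.
Qed.

Lemma star_adj_proj (V : choiceType) (adj : rel V) (e : V) (N : nat) u v :
  @star_adj _ adj e N u v -> adj (sproj u) (sproj v).
Proof. by case: u => [[i x]|]; case: v => [[j y]|] //= /andP[]. Qed.

Lemma star_adj_sym (V : choiceType) (adj : rel V) (e : V) (N : nat)
  (adj_sym : symmetric adj) : symmetric (@star_adj _ adj e N).
Proof.
by move=> [[i x]|] [[j y]|] //=; rewrite adj_sym // eq_sym.
Qed.

Lemma path_proj (V : choiceType) (adj : rel V) (e : V) (N : nat) u p :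
  path (@star_adj _ adj e N) u p ->
  path adj (sproj u) (map (@sproj V e N) p).
Proof.
elim: p u => //= v p IH u /andP[h1 h2].
by rewrite (star_adj_proj h1) IH.
Qed.

Lemma path_lift (V : choiceType) (adj : rel V) (e : V) (N : nat)
  (adj_irr : irreflexive adj) (i : 'I_N) x p :
  path adj x p -> path (@star_adj _ adj e N) (slift e i x) (map (slift e i) p).
Proof.
elim: p x => //= y p IH x /andP[h1 h2].
by rewrite star_adj_lift // h1 IH.
Qed.

Lemma is_dist_lift (V : choiceType) (adj : rel V) (e : V) (N : nat)
  (adj_irr : irreflexive adj) (i : 'I_N) x y n :
  is_dist (@star_adj _ adj e N) (slift e i x) (slift e i y) n <-> is_dist adj x y n.
Proof.
split.
- move=> [[p [hp hl hs]] hmin]; split.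
  + exists (map (@sproj V e N) p); split.
    * by have := path_proj hp; rewrite sproj_lift.
    * by rewrite -[x](sproj_lift e i) last_map hl sproj_lift.
    * by rewrite size_map.
  + move=> q hq hl'; rewrite -(size_map (slift e i)); apply: hmin.
    * exact: path_lift.
    * by rewrite last_map hl'.
- move=> [[p [hp hl hs]] hmin]; split.
  + exists (map (slift e i) p); split.
    * exact: path_lift.
    * by rewrite last_map hl.
    * by rewrite size_map.
  + move=> q hq hl'; rewrite -(size_map (@sproj V e N)); apply: hmin.
    * by have := path_proj hq; rewrite sproj_lift.
    * by rewrite -[x](sproj_lift e i) last_map hl' sproj_lift.
Qed.

Lemma path_rev (T : eqType) (r : rel T) (rsym : symmetric r) x p :
  path r x p ->
  [/\ path r (last x p) (rev (belast x p)),
      last (last x p) (rev (belast x p)) = x & size (rev (belast x p)) = size p].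
Proof.
move=> hp; split.
- rewrite rev_path; move: hp; apply: sub_path => a b; by rewrite rsym.
- by case: p {hp} => //= a q; rewrite rev_cons last_rcons.
- by rewrite size_rev size_belast.
Qed.

Lemma is_dist_sym (T : eqType) (r : rel T) (rsym : symmetric r) x y n :
  is_dist r x y n -> is_dist r y x n.
Proof.
move=> [[p [hp hl hs]] hmin]; split.
- have [h1 h2 h3] := path_rev rsym hp.
  by exists (rev (belast x p)); rewrite -hl -hs.
- move=> q hq hl'; have [h1 h2 h3] := path_rev rsym hq.
  rewrite -h3; apply: hmin; by rewrite -hl'.
Qed.

Lemma star_cross (V : choiceType) (adj : rel V) (e : V) (N : nat)
  (i j : 'I_N) x w p : i != j ->
  path (@star_adj _ adj e N) (Some (i, x)) p ->
  last (Some (i, x)) p = Some (j, w) ->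
  exists p2, [/\ path (@star_adj _ adj e N) None p2,
     last None p2 = Some (j, w) & (size p2 < size p)%N].
Proof.
move=> hij hp hl.
have hN : None \in p.
  elim: p x hp hl => [|c p IH] x /=.
    by move=> _ [] hi _; rewrite hi eqxx in hij.
  case: c => [[i' y]|] /=; last by rewrite inE eqxx.
  move=> /andP[/andP[/eqP <- _] hp] hl.
  by rewrite inE (IH y hp hl) orbT.
case/splitPr: hN hp hl => p1 p2.
rewrite cat_path last_cat /= => /andP[_ /andP[_ hp2]] hl.
by exists p2; split => //; rewrite size_cat /= addnS ltnS leq_addl.
Qed.

Lemma star_same_copy (V : choiceType) (adj : rel V) (e : V) (N : nat) (k : nat)
  (i j : 'I_N) x w :
  distk (@star_adj _ adj e N) k (Some (i, x)) (Some (j, w)) ->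
  distk adj k e (val w) -> i = j.
Proof.
move=> [[p [hp hl hs]] _] [_ hmin]; apply/eqP; apply: contraT => hij.
have [p2 [hp2 hl2 hs2]] := star_cross hij hp hl.
have hl3 : last e (map (@sproj V e N) p2) = val w.
  by rewrite -[e]/(@sproj V e N None) last_map hl2.
have := hmin _ (path_proj hp2) hl3.
by rewrite size_map -hs leqNgt hs2.
Qed.

Definition walkset (V : choiceType) (adj : rel V) (x : V) (n : nat) : set V :=
  [set y | exists p, [/\ path adj x p, last x p = y & size p = n]].

Lemma walkset_finite (V : choiceType) (adj : rel V)
  (loc_fin : forall x : V, finite_set [set y | adj x y]) x n :
  finite_set (walkset adj x n).
Proof.
elim: n => [|n IH].
  apply: (sub_finite_set _ (finite_set1 x)) => y [p [_ hl hs]].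
  by case: p hl hs => //= <-.
apply: (sub_finite_set _ (bigcup_finite IH (fun y _ => loc_fin y))).
move=> z [p [hp hl hs]]; case/lastP: p hp hl hs => [|q c] //.
rewrite rcons_path last_rcons size_rcons => /andP[hq ha] <- [hs].
by exists (last x q) => //; exists q.
Qed.

Lemma distk_walk (T : eqType) (r : rel T) k x y :
  distk r k x y -> exists p, [/\ path r x p, last x p = y & size p = k].
Proof. by case. Qed.

Lemma star_nb_sub (V : choiceType) (adj : rel V) (e : V) (N : nat) (k : nat) v :
  [set w | distk (@star_adj _ adj e N) k v w] `<=`
  [set None] `|` (fun p : 'I_N * V => slift e p.1 p.2) @`
     ([set: 'I_N] `*` walkset adj (sproj v) k).
Proof.
move=> [[i w]|] /= h; last by left.
right; exists (i, val w); last by rewrite /= slift_Some.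
split => //=; have [p [hp hl hs]] := distk_walk h.
exists (map (@sproj V e N) p); split.
- exact: path_proj.
- by rewrite last_map hl.
- by rewrite size_map.
Qed.

Lemma star_nb_finite (V : choiceType) (adj : rel V) (e : V) (N : nat) (k : nat)
  (loc_fin : forall x : V, finite_set [set y | adj x y]) v :
  finite_set [set w | distk (@star_adj _ adj e N) k v w].
Proof.
apply: (sub_finite_set (@star_nb_sub V adj e N k v)).
rewrite finite_setU; split; first exact: finite_set1.
apply: finite_image; apply: finite_setX; first exact: finite_finset.
exact: walkset_finite.
Qed.

Lemma ler_fsum (R : realType) (T : choiceType) (A : set T) (F G : T -> R) :
  finite_set A -> (forall x, A x -> F x <= G x) ->
  \sum_(x \in A) F x <= \sum_(x \in A) G x.
Proof.
move=> fA h; rewrite !fsbig_finite //.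
rewrite big_seq [X in _ <= X]big_seq; apply: ler_sum => x.
by rewrite in_fset_set // inE => /h.
Qed.

Lemma fsum_sub (R : realType) (T : choiceType) (A B : set T) (F : T -> R) :
  finite_set B -> A `<=` B -> (forall x, B x -> 0 <= F x) ->
  \sum_(x \in A) F x <= \sum_(x \in B) F x.
Proof.
move=> fB AB h; rewrite [X in _ <= X](fsbigID A) //.
rewrite (setIidr AB) lerDl; apply: fsumr_ge0 => x [Bx _].
exact: h.
Qed.

Lemma fsum_bound (R : realType) (T : choiceType) (A B : set T) (F : T -> R)
  (c : R) : finite_set A -> finite_set B -> 0 <= c ->
  (forall x, B x -> 0 <= F x) -> (forall x, B x -> ~ A x -> F x = 0) ->
  (forall x, B x -> A x -> F x <= c) ->
  \sum_(x \in B) F x <= c * \sum_(x \in A) (1 : R).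
Proof.
move=> fA fB c0 h0 hout hin.
rewrite (fsbigID A) //= [X in _ + X]fsbig1 ?addr0; last first.
  by move=> x [Bx /= nAx]; apply: hout.
apply: (@le_trans _ _ (\sum_(x \in B `&` A) c)).
  apply: ler_fsum; first exact: finite_setIl.
  by move=> x [Bx Ax]; apply: hin.
rewrite mulr_fsumr; under [X in _ <= X]eq_fsbigr do rewrite mulr1.
apply: fsum_sub => //.

Qed.

Lemma fsum_ord_cst (R : realType) (N : nat) (c : R) :
  \sum_(i \in [set: 'I_N]) c = N%:R * c.
Proof.
have -> : \sum_(i \in [set: 'I_N]) c = \sum_(a \in (@nat_of_ord N) @` [set: 'I_N]) c.
  by rewrite fsbig_image //; move=> x y _ _; apply: val_inj.
have -> : (@nat_of_ord N) @` [set: 'I_N] = `I_N.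
  apply/seteqP; split => [x [i _ <-]|x /= hx]; first exact: ltn_ord.
  by exists (Ordinal hx).
rewrite -fsbig_ord sumr_const card_ord.
by rewrite mulr_natl.
Qed.

Lemma nwalks_ge0 (R : realType) (T : choiceType) (r : T -> T -> Prop) o m x :
  0 <= nwalks R r o m x.
Proof.
elim: m x => [|m IH] x /=; first by rewrite ler0n.
by apply: fsumr_ge0 => y _; apply: IH.
Qed.

Lemma nwalks1_0 (R : realType) (T : choiceType) (r : T -> T -> Prop) o x :
  ~ r x o -> nwalks R r o 1 x = 0.
Proof.
move=> h /=; apply: fsbig1 => y /= hy.
by case: eqP => // eyo; rewrite eyo in hy.
Qed.

Lemma nwalks1_1 (R : realType) (T : choiceType) (r : T -> T -> Prop) o x :
  finite_set [set y | r x y] -> r x o -> nwalks R r o 1 x = 1.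
Proof.
move=> fin h /=; rewrite (fsbigD1 o) //= eqxx fsbig1 ?addr0 //.
by move=> y [_ /= /eqP hy]; rewrite (negbTE hy).
Qed.

Lemma nwalks1_le1 (R : realType) (T : choiceType) (r : T -> T -> Prop) o x :
  finite_set [set y | r x y] -> nwalks R r o 1 x <= 1.
Proof.
move=> fin /=; rewrite -[X in _ <= X]mulr1.
rewrite -[X in _ <= _ * X](@fsbig_set1 R 0 +%R T o (fun=> (1:R))).
apply: fsum_bound => //.
- by move=> y _ /= hy; case: eqP.
- by move=> y _ _; rewrite lern1 leq_b1.
Qed.

Lemma Sk_ne (V : choiceType) (adj : rel V) (e : V) (k : nat) (hk : (1 <= k)%N) u :
  distk adj k e u -> u != e.
Proof.
move=> [_ hmin]; apply/eqP => hu.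
by have := hmin [::] erefl (esym hu); rewrite leqn0 => /eqP hk0; rewrite hk0 in hk.
Qed.

Lemma distk_not_refl (T : eqType) (r : rel T) (k : nat) (hk : (1 <= k)%N) x :
  ~ distk r k x x.
Proof.
by move=> [_ hmin]; have := hmin [::] erefl erefl; rewrite leqn0 => /eqP hk0; rewrite hk0 in hk.
Qed.

Lemma Sk_finite (V : choiceType) (adj : rel V) (e : V) (k : nat)
  (loc_fin : forall x : V, finite_set [set y | adj x y]) :
  finite_set [set x : V | distk adj k e x].
Proof.
apply: (sub_finite_set _ (walkset_finite loc_fin e k)).
by move=> x /distk_walk.
Qed.

Lemma rs_walk (V : choiceType) (adj : rel V) (e : V) (N k : nat) v w :
  distk (@star_adj _ adj e N) k v w -> walkset adj (sproj v) k (sproj w).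
Proof.
move=> /distk_walk [p [hp hl hs]].
exists (map (@sproj V e N) p); split.
- exact: path_proj.
- by rewrite last_map hl.
- by rewrite size_map.
Qed.

Lemma slift_Sub (V : choiceType) (e : V) (N : nat) (i : 'I_N) u (hu : u != e) :
  slift e i u = Some (i, exist _ u hu).
Proof. by rewrite -slift_Some. Qed.

Lemma nbNone_eq (V : choiceType) (adj : rel V) (e : V) (N k : nat)
  (adj_irr : irreflexive adj) (hk : (1 <= k)%N) :
  [set w | distk (@star_adj _ adj e N) k None w] =
  (fun p : 'I_N * V => slift e p.1 p.2) @` ([set: 'I_N] `*` [set x | distk adj k e x]).
Proof.
apply/seteqP; split.
- move=> [[i w]|] /= h; last by have := distk_not_refl hk h.
  exists (i, val w); last by rewrite /= slift_Some.
  split => //=.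
  by move: h; rewrite -(slift_e e i) -slift_Some => /(@is_dist_lift _ _ _ _ adj_irr).
- move=> w [[i u] [_ /= hu] <-] /=.
  by rewrite -(slift_e e i); apply/(@is_dist_lift _ _ _ _ adj_irr).
Qed.

Lemma rs_to_None (V : choiceType) (adj : rel V) (e : V) (N k : nat)
  (adj_sym : symmetric adj) (adj_irr : irreflexive adj) (i : 'I_N) u :
  distk adj k e u -> distk (@star_adj _ adj e N) k (slift e i u) None.
Proof.
move=> h; rewrite -(slift_e e i); apply/(@is_dist_lift _ _ _ _ adj_irr).
exact: is_dist_sym.
Qed.

Lemma sum_NbNone (R : realType) (V : choiceType) (adj : rel V) (e : V) (N k : nat)
  (adj_irr : irreflexive adj) (hk : (1 <= k)%N)
  (loc_fin : forall x : V, finite_set [set y | adj x y]) (F : starV e N -> R) :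
  \sum_(w \in [set w | distk (@star_adj _ adj e N) k None w]) F w =
  \sum_(i \in [set: 'I_N]) \sum_(u \in [set x | distk adj k e x]) F (slift e i u).
Proof.
rewrite nbNone_eq // fsbig_image; last first.
  move=> [i u] [i' u'] /set_mem [_ /= hu] /set_mem [_ /= hu'] /=.
  move=> h; have := congr1 (@sproj V e N) h; rewrite !sproj_lift => eu.
  move: h; rewrite (slift_Sub i (Sk_ne hk hu)) (slift_Sub i' (Sk_ne hk hu')).
  by move=> [-> _]; rewrite eu.
rewrite pair_fsbig //; first exact: finite_finset.
exact: Sk_finite.
Qed.

Lemma nwalksS (R : realType) (T : choiceType) (r : T -> T -> Prop) o m x :
  nwalks R r o m.+1 x = \sum_(y \in [set y | r x y]) nwalks R r o m y.
Proof. by []. Qed.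

Lemma W0 (R : realType) (T : choiceType) (r : T -> T -> Prop) o :
  nwalks R r o 0 o = 1.
Proof. by rewrite /= eqxx. Qed.

Lemma W1 (R : realType) (V : choiceType) (adj : rel V) (e : V) (N k : nat)
  (hk : (1 <= k)%N) :
  nwalks R (distk (@star_adj _ adj e N) k) None 1 None = 0.
Proof. by apply: nwalks1_0; apply: distk_not_refl. Qed.

Lemma W2 (R : realType) (V : choiceType) (adj : rel V) (e : V) (N k : nat)
  (adj_sym : symmetric adj) (adj_irr : irreflexive adj) (hk : (1 <= k)%N)
  (loc_fin : forall x : V, finite_set [set y | adj x y]) :
  nwalks R (distk (@star_adj _ adj e N) k) None 2 None =
  N%:R * \sum_(x \in [set x : V | distk adj k e x]) (1 : R).
Proof.
rewrite nwalksS sum_NbNone // -fsum_ord_cst.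
apply: eq_fsbigr => i _; apply: eq_fsbigr => u /set_mem hu.
apply: nwalks1_1; first exact: star_nb_finite.
exact: rs_to_None.
Qed.

Lemma sum1_NbNone (R : realType) (V : choiceType) (adj : rel V) (e : V) (N k : nat)
  (adj_irr : irreflexive adj) (hk : (1 <= k)%N)
  (loc_fin : forall x : V, finite_set [set y | adj x y]) :
  \sum_(w \in [set w | distk (@star_adj _ adj e N) k None w]) (1 : R) =
  N%:R * \sum_(x \in [set x : V | distk adj k e x]) (1 : R).
Proof. by rewrite sum_NbNone // fsum_ord_cst. Qed.

Lemma c_le (R : realType) (V : choiceType) (adj : rel V) (e : V) (N k : nat)
  (adj_sym : symmetric adj) (adj_irr : irreflexive adj) (hk : (1 <= k)%N)
  (loc_fin : forall x : V, finite_set [set y | adj x y]) (j : 'I_N) x :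
  nwalks R (distk (@star_adj _ adj e N) k) None 2 (Some (j, x)) <=
  \sum_(x \in [set x : V | distk adj k e x]) (1 : R).
Proof.
rewrite nwalksS -[X in _ <= X]mul1r.
rewrite -(@fsbig_image _ 0 +%R _ _ _ (slift e j) (fun=> (1:R))); last first.
  by move=> a b _ _; apply: slift_inj.
apply: fsum_bound => //.
- by apply: finite_image; apply: Sk_finite.
- exact: star_nb_finite.
- by move=> w _; apply: nwalks_ge0.
- move=> w /= hzw nA; apply: nwalks1_0 => hw.
  case: w hzw nA hw => [[i' x'']|] hzw nA hw; last exact: (distk_not_refl hk hw).
  have hw' := is_dist_sym (@star_adj_sym _ _ e N adj_sym) hw.
  have he : distk adj k e (val x'').
    by move: hw'; rewrite -(slift_e e i') -slift_Some => /(@is_dist_lift _ _ _ _ adj_irr).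
  have ji := star_same_copy hzw he.
  by apply: nA; exists (val x'') => //; rewrite slift_Some ji.
- by move=> w /= hw _; apply: nwalks1_le1; apply: star_nb_finite.
Qed.

Lemma n3_le (R : realType) (V : choiceType) (adj : rel V) (e : V) (N k : nat)
  (adj_sym : symmetric adj) (adj_irr : irreflexive adj) (hk : (1 <= k)%N)
  (loc_fin : forall x : V, finite_set [set y | adj x y]) (j : 'I_N) u :
  distk adj k e u ->
  nwalks R (distk (@star_adj _ adj e N) k) None 3 (slift e j u) <=
  N%:R * \sum_(x \in [set x : V | distk adj k e x]) (1 : R) +
  (\sum_(x \in [set x : V | distk adj k e x]) (1 : R)) *
  \sum_(u \in [set x : V | distk adj k e x]) \sum_(x \in walkset adj u k) (1 : R).
Proof.
move=> hu.
set sig := \sum_(x \in [set x : V | distk adj k e x]) (1 : R).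
have sig0 : 0 <= sig by apply: fsumr_ge0.
set B := \sum_(u \in [set x : V | distk adj k e x]) _.
rewrite nwalksS; set F := nwalks R _ None 2.
rewrite (fsbigD1 None) /=; last 2 first.
- exact: star_nb_finite.
- exact: rs_to_None.
rewrite /F W2 // lerD2l.
apply: (@le_trans _ _ (sig * \sum_(x \in walkset adj u k) (1 : R))); last first.
  apply: ler_pM => //; first exact: fsumr_ge0.
  rewrite -[X in X <= _](@fsbig_set1 _ 0 +%R _ u
     (fun u => \sum_(x \in walkset adj u k) (1 : R))).
  apply: fsum_sub; first exact: Sk_finite.
  - by move=> y /= ->.
  - by move=> y _; apply: fsumr_ge0.
rewrite -(@fsbig_image _ 0 +%R _ _ _ (slift e j) (fun=> (1:R))); last first.
  by move=> a b _ _; apply: slift_inj.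
apply: fsum_bound => //.
- by apply: finite_image; apply: walkset_finite.
- by apply: finite_setD; apply: star_nb_finite.
- by move=> z _; apply: nwalks_ge0.
- move=> z [/= hz hzN] nA; exfalso; apply: nA.
  case: z hz hzN => [[i x]|] hz hzN; last by case: hzN.
  have hw := rs_walk hz; rewrite sproj_lift /= in hw.
  have hz' := is_dist_sym (@star_adj_sym _ _ e N adj_sym) hz.
  rewrite (slift_Sub j (Sk_ne hk hu)) in hz'.
  have ij := star_same_copy hz' hu.
  by exists (val x) => //; rewrite slift_Some ij.
- move=> z [/= hz hzN] _.
  case: z hz hzN => [[i x]|] hz hzN; last by case: hzN.
  exact: c_le.
Qed.

Lemma W4_le (R : realType) (V : choiceType) (adj : rel V) (e : V) (N k : nat)
  (adj_sym : symmetric adj) (adj_irr : irreflexive adj) (hk : (1 <= k)%N)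
  (loc_fin : forall x : V, finite_set [set y | adj x y]) :
  nwalks R (distk (@star_adj _ adj e N) k) None 4 None <=
  (N%:R * \sum_(x \in [set x : V | distk adj k e x]) (1 : R) +
  (\sum_(x \in [set x : V | distk adj k e x]) (1 : R)) *
  \sum_(u \in [set x : V | distk adj k e x]) \sum_(x \in walkset adj u k) (1 : R))
  * (N%:R * \sum_(x \in [set x : V | distk adj k e x]) (1 : R)).
Proof.
rewrite nwalksS -[X in _ <= _ * X](@sum1_NbNone R V adj e N k) //.
apply: fsum_bound => //.
- exact: star_nb_finite.
- exact: star_nb_finite.
- apply: addr_ge0; first by apply: mulr_ge0 => //; apply: fsumr_ge0.
  apply: mulr_ge0; apply: fsumr_ge0 => // y _; exact: fsumr_ge0.
- by move=> y _; apply: nwalks_ge0.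
- move=> y hy _.
  have : ((fun p : 'I_N * V => slift e p.1 p.2) @`
     ([set: 'I_N] `*` [set x | distk adj k e x])) y by rewrite -nbNone_eq.
  move=> -[[i u] [_ /= hu] <-] /=.
  exact: n3_le.
Qed.

Lemma cont_delta (R : realType) (f : R -> R) (fc : continuous f) a eps :
  0 < eps -> exists2 d, 0 < d & forall t, `|a - t| < d -> `|f a - f t| < eps.
Proof.
move=> he; have := fc a; move/cvgrPdist_lt => /(_ eps he).
move=> /nbhs_ballP [d d0 hd]; exists d => // t ht; exact: hd.
Qed.

Lemma sq_norm_le (R : realType) (y d : R) : 0 <= d -> d <= `|y| -> d ^+ 2 <= y ^+ 2.
Proof.
move=> d0; case: (lerP 0 y) => hy; [rewrite ger0_norm // | rewrite ltr0_norm //] => h.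
  by nra.
by nra.
Qed.

Lemma poly_bound (R : realType) (x d : R) : 0 < d -> d <= 1 ->
  d <= `|x - 1| -> d <= `|x + 1| -> (1 + `|x|) * d ^+ 2 <= (x ^+ 2 - 1) ^+ 2.
Proof.
move=> d0 d1 h1 h2.
have -> : (x ^+ 2 - 1) ^+ 2 = (x - 1) ^+ 2 * (x + 1) ^+ 2.
  by rewrite -exprMn; congr (_ ^+ 2); rewrite mulrDr !mulrBl mul1r mulr1; ring.
have dd : d ^+ 2 <= 1 by rewrite expr_le1 // ltW.
case: (lerP 0 x) => hx.
- rewrite ger0_norm //.
  have a1 : d ^+ 2 <= (x - 1) ^+ 2.
    by apply: sq_norm_le => //; apply: ltW.
  have b1 : 1 + x <= (x + 1) ^+ 2 by rewrite addrC; nra.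
  rewrite mulrC; apply: ler_pM; [exact: sqr_ge0 | lra | exact: a1 | lra].
- rewrite ltr0_norm //.
  have a1 : d ^+ 2 <= (x + 1) ^+ 2.
    by apply: sq_norm_le => //; apply: ltW.
  have b1 : 1 - x <= (x - 1) ^+ 2 by nra.
  rewrite mulrC [X in _ <= X]mulrC; apply: ler_pM; [exact: sqr_ge0 | lra | exact: a1 | lra].
Qed.

Lemma near_bound (R : realType) (c1 u d3 eps : R) :
  0 < eps -> d3 = eps / 2 / (`|c1| + 1) -> `|u| <= d3 -> `|c1 * u| <= eps / 2.
Proof.
move=> he hd hu; rewrite normrM.
have hc : 0 < `|c1| + 1 by rewrite ltr_pwDr // normr_ge0.
apply: (@le_trans _ _ ((`|c1| + 1) * d3)).
  by apply: ler_pM => //; lra.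
by rewrite hd mulrC divfK // gt_eqF.
Qed.

Lemma approx_pm1 (R : realType) (f : R -> R) (fc : continuous f) (M : R)
  (hM : forall x, `|f x| <= M) (eps : R) (he : 0 < eps) :
  exists K, 0 <= K /\ forall x,
    `|f x - (f (-1) + f 1) / 2 - (f 1 - f (-1)) / 2 * x| <=
      eps + K * (x ^+ 2 - 1) ^+ 2.
Proof.
set c0 := (f (-1) + f 1) / 2; set c1 := (f 1 - f (-1)) / 2.
have he2 : 0 < eps / 2 by rewrite divr_gt0.
have [d1 d10 hd1] := cont_delta fc 1 he2.
have [d2 d20 hd2] := cont_delta fc (-1) he2.
set d3 := eps / 2 / (`|c1| + 1).
have hc : 0 < `|c1| + 1 by rewrite ltr_pwDr // normr_ge0.
have d30 : 0 < d3 by rewrite divr_gt0.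
set d := Num.min 1 (Num.min (Num.min d1 d2) d3).
have d0 : 0 < d by rewrite !lt_min d10 d20 d30 ltr01.
have dle : [/\ d <= 1, d <= d1, d <= d2 & d <= d3].
  by rewrite !ge_min !lexx !orbT.
case: dle => dl1 dl2 dl3 dl4.
have M0 : 0 <= M by apply: le_trans (hM 0); exact: normr_ge0.
set C := M + `|c0| + `|c1|.
have C0 : 0 <= C by rewrite !addr_ge0 // normr_ge0.
exists (C / d ^+ 2); split; first by rewrite divr_ge0 // exprn_ge0 // ltW.
move=> x.
have Kp : 0 <= C / d ^+ 2 * (x ^+ 2 - 1) ^+ 2.
  by rewrite mulr_ge0 ?sqr_ge0 // divr_ge0 // exprn_ge0 // ltW.
case: (ltrP `|x - 1| d) => h1.
  have -> : f x - c0 - c1 * x = - (f 1 - f x) + c1 * (1 - x).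
    by rewrite /c0 /c1; field.
  apply: (le_trans (ler_normD _ _)); rewrite normrN.
  have a1 : `|f 1 - f x| < eps / 2.
    by apply: hd1; rewrite distrC; apply: lt_le_trans h1 dl2.
  have a2 : `|c1 * (1 - x)| <= eps / 2.
    apply: (near_bound he erefl); rewrite distrC; exact: ltW (lt_le_trans h1 dl4).
  lra.
case: (ltrP `|x + 1| d) => h2.
  have -> : f x - c0 - c1 * x = - (f (-1) - f x) - c1 * (x + 1).
    by rewrite /c0 /c1; field.
  apply: (le_trans (ler_normB _ _)); rewrite normrN.
  have a1 : `|f (-1) - f x| < eps / 2.
    by apply: hd2; rewrite -opprD normrN addrC; apply: lt_le_trans h2 dl3.
  have a2 : `|c1 * (x + 1)| <= eps / 2.
    apply: (near_bound he erefl); exact: ltW (lt_le_trans h2 dl4).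
  lra.
have pb := poly_bound d0 dl1 h1 h2.
have b1 : `|f x - c0 - c1 * x| <= C * (1 + `|x|).
  apply: (le_trans (ler_normB _ _)); rewrite normrM.
  apply: (@le_trans _ _ (M + `|c0| + `|c1| * `|x|)).
    have := ler_normB (f x) c0; have := hM x.
    have : 0 <= `|c1| * `|x| by rewrite mulr_ge0 // normr_ge0.
    lra.
  rewrite /C mulrDr mulr1 mulrDl.
  have : 0 <= (M + `|c0|) * `|x| by rewrite mulr_ge0 ?addr_ge0 ?normr_ge0.
  have := normr_ge0 c1; lra.
have b2 : C * (1 + `|x|) <= C / d ^+ 2 * (x ^+ 2 - 1) ^+ 2.
  rewrite mulrAC ler_pdivlMr ?exprn_gt0 // -mulrA.
  by apply: ler_wpM2l.
lra.
Qed.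

Local Open Scope ereal_scope.
Lemma poly_int (R : realType) (mu : probability R R) (a b c d m0 m1 m2 m4 : R)
  (hi : forall m, mu.-integrable setT (fun x : R => (x ^+ m)%:E))
  (h0 : \int[mu]_x (x ^+ 0)%:E = m0%:E)
  (h1 : \int[mu]_x (x ^+ 1)%:E = m1%:E)
  (h2 : \int[mu]_x (x ^+ 2)%:E = m2%:E)
  (h4 : \int[mu]_x (x ^+ 4)%:E = m4%:E) :
  mu.-integrable setT (fun x => (a * x ^+ 0 + b * x ^+ 1 + c * x ^+ 2 + d * x ^+ 4)%:E) /\
  \int[mu]_x (a * x ^+ 0 + b * x ^+ 1 + c * x ^+ 2 + d * x ^+ 4)%:E =
    (a * m0 + b * m1 + c * m2 + d * m4)%:E.
Proof.
have -> : (fun x => (a * x ^+ 0 + b * x ^+ 1 + c * x ^+ 2 + d * x ^+ 4)%:E) =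
  (fun x => ((a%:E * (x ^+ 0)%:E + b%:E * (x ^+ 1)%:E) + c%:E * (x ^+ 2)%:E)
     + d%:E * (x ^+ 4)%:E).
  by apply/funext => x; rewrite !EFinD !EFinM.
have iA := integrableZl measurableT a (hi 0%N).
have iB := integrableZl measurableT b (hi 1%N).
have iC := integrableZl measurableT c (hi 2%N).
have iD := integrableZl measurableT d (hi 4%N).
have iAB := integrableD measurableT iA iB.
have iABC := integrableD measurableT iAB iC.
split; first exact: (integrableD measurableT iABC iD).
rewrite (integralD measurableT iABC iD) (integralD measurableT iAB iC).
rewrite (integralD measurableT iA iB).
rewrite !integralZl // h0 h1 h2 h4.
by rewrite !EFinD !EFinM.
Qed.
Local Close Scope ereal_scope.
Lemma f_integrable (R : realType) (mu : probability R R) (f : R -> R)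
  (fc : continuous f) (M : R) (hM : forall x, `|f x| <= M) :
  mu.-integrable setT (fun x => (f x)%:E).
Proof.
apply: (measurable_bounded_integrable measurableT).
- have h1 := probability_setT mu. rewrite [X in (X < _)%E]h1 ltry. done.
- exact: measurable_realfun.continuous_measurable_fun.
- exists M; split; first exact: num_real.
  move=> y hy x _ /=; apply: le_trans (hM x) (ltW hy).
Qed.

Lemma int_bound (R : realType) (mu : probability R R) (f : R -> R)
  (fc : continuous f) (M : R) (hM : forall x, `|f x| <= M) (eps K c0 c1 a4 : R)
  (hK : forall x, `|f x - c0 - c1 * x| <= eps + K * (x ^+ 2 - 1) ^+ 2)
  (hi : forall m, mu.-integrable setT (fun x : R => (x ^+ m)%:E))
  (h0 : (\int[mu]_x (x ^+ 0)%:E = 1%:E)%E)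
  (h1 : (\int[mu]_x (x ^+ 1)%:E = 0%:E)%E)
  (h2 : (\int[mu]_x (x ^+ 2)%:E = 1%:E)%E)
  (h4 : (\int[mu]_x (x ^+ 4)%:E = a4%:E)%E) :
  (\int[mu]_x (f x)%:E = (fine (\int[mu]_x (f x)%:E))%:E)%E /\
  `|fine (\int[mu]_x (f x)%:E) - c0| <= eps + K * (a4 - 1).
Proof.
have fi := f_integrable mu fc hM.
have ffin := integrable_fin_num measurableT fi.
split; first by rewrite fineK.
have [iu hu] := @poly_int R mu (c0 + eps + K) c1 (-(2 * K)) K 1 0 1 a4 hi h0 h1 h2 h4.
have [il hl] := @poly_int R mu (c0 - eps - K) c1 (2 * K) (- K) 1 0 1 a4 hi h0 h1 h2 h4.
have up : (\int[mu]_x (f x)%:E <=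
    ((c0 + eps + K) * 1 + c1 * 0 + - (2 * K) * 1 + K * a4)%:E)%E.
  rewrite -hu; apply: le_integral => //= x _; rewrite lee_fin.
  have := hK x; rewrite ler_norml => /andP[_ h].
  have e : (x ^+ 2 - 1) ^+ 2 = x ^+ 4 - 2 * x ^+ 2 + 1 by ring.
  rewrite e expr0 expr1 in h *; lra.
have lo : (((c0 - eps - K) * 1 + c1 * 0 + (2 * K) * 1 + - K * a4)%:E <=
    \int[mu]_x (f x)%:E)%E.
  rewrite -hl; apply: le_integral => //= x _; rewrite lee_fin.
  have := hK x; rewrite ler_norml => /andP[h _].
  have e : (x ^+ 2 - 1) ^+ 2 = x ^+ 4 - 2 * x ^+ 2 + 1 by ring.
  rewrite e expr0 expr1 in h *; lra.
rewrite -(fineK ffin) lee_fin in up; rewrite -(fineK ffin) lee_fin in lo.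
rewrite ler_norml; apply/andP; split; lra.
Qed.


Unset Implicit Arguments.

Lemma mom2_alg (R : realType) (P : R) : 0 < P -> (Num.sqrt P)^-1 ^+ 2 * P = 1.
Proof.
move=> hP; rewrite exprVn sqr_sqrtr ?ltW // mulVf //; exact: lt0r_neq0.
Qed.

Lemma mom4_alg (R : realType) (P s B W4 n : R) : 0 < n -> 0 < s -> P = n * s ->
  W4 <= (P + s * B) * P -> (Num.sqrt P)^-1 ^+ 4 * W4 <= 1 + B / n.
Proof.
move=> n0 s0 hP hW.
have P0 : 0 < P by rewrite hP mulr_gt0.
have -> : (Num.sqrt P)^-1 ^+ 4 = (P ^+ 2)^-1.
  by rewrite exprVn -[4%N]/(2 * 2)%N exprM sqr_sqrtr // ltW.
rewrite mulrC ler_pdivrMr ?exprn_gt0 //.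
apply: (le_trans hW); rewrite le_eqVlt; apply/orP; left; apply/eqP; rewrite hP; field.
by rewrite lt0r_neq0.
Qed.

Theorem theorem1p2 (R : realType) (V : choiceType) (adj : rel V) (e : V)
  (k : nat)
  (adj_sym : symmetric adj) (adj_irr : irreflexive adj)
  (loc_fin : forall x : V, finite_set [set y | adj x y])
  (conn : forall x y : V, exists p : seq V, path adj x p /\ last x p = y)
  (hk : (1 <= k)%N)
  (sigma : R)
  (sigma_def : sigma = \sum_(x \in [set x : V | distk adj k e x]) (1 : R))
  (sigma_ge1 : 1 <= sigma)
  (mu : nat -> probability R R)
  (mu_mom : forall N m : nat, (0 < N)%N ->
     (mu N).-integrable setT (fun x : R => (x ^+ m)%:E) /\
     (\int[mu N]_x (x ^+ m)%:E =
       ((Num.sqrt (N%:R * sigma))^-1 ^+ m *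
        nwalks R (distk (@star_adj V adj e N) k) None m None)%:E)%E) :
  forall f : R -> R, continuous f -> (exists M : R, forall x, `|f x| <= M) ->
    (fun N => \int[mu N]_x (f x)%:E)%E @ \oo -->
      ((f (-1) + f 1) / 2)%:E.
Proof.
move=> f fc [M hM].
set B := \sum_(u \in [set x : V | distk adj k e x]) \sum_(x \in walkset adj u k) (1 : R).
have B0 : 0 <= B by apply: fsumr_ge0 => u _; apply: fsumr_ge0.
have s0 : 0 < sigma by lra.
have hmom : forall N : nat, (0 < N)%N ->
  [/\ forall m, (mu N).-integrable setT (fun x : R => (x ^+ m)%:E),
      (\int[mu N]_x (x ^+ 0)%:E = 1%:E)%E,
      (\int[mu N]_x (x ^+ 1)%:E = 0%:E)%E,
      (\int[mu N]_x (x ^+ 2)%:E = 1%:E)%E &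
      exists a4, (\int[mu N]_x (x ^+ 4)%:E = a4%:E)%E /\ a4 <= 1 + B / N%:R].
  move=> N N0.
  have n0 : 0 < (N%:R : R) by rewrite ltr0n.
  split.
  - by move=> m; case: (mu_mom N m N0).
  - by case: (mu_mom N 0 N0) => _ ->; rewrite expr0 mul1r W0.
  - by case: (mu_mom N 1 N0) => _ ->; rewrite W1 // mulr0.
  - case: (mu_mom N 2 N0) => _ ->; rewrite W2 // -sigma_def mom2_alg //.
    by rewrite mulr_gt0.
  - case: (mu_mom N 4 N0) => _ ->; eexists; split; first reflexivity.
    apply: (@mom4_alg R _ sigma B _ _ n0 s0 erefl).
    have := @W4_le R V adj e N k adj_sym adj_irr hk loc_fin.
    by rewrite -sigma_def.
apply/fine_cvgP; split.
  exists 1%N => // N /= N0.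
  apply: (integrable_fin_num measurableT).
  exact: (f_integrable (mu N) fc hM).
apply/cvgrPdist_le => eps e0.
have e2 : 0 < eps / 2 by rewrite divr_gt0.
have [K [K0 hK]] := approx_pm1 fc hM e2.
set X := 2 * K * B / eps.
have X0 : 0 <= X by rewrite divr_ge0 ?mulr_ge0 // ltW.
exists (maxn 1 (Num.Def.archi_bound X)) => // N /= hN.
have N0 : (0 < N)%N by apply: leq_trans hN; rewrite leq_maxl.
have NX : X < N%:R.
  apply: (lt_le_trans (archi_boundP X0)); rewrite ler_nat.
  by apply: leq_trans hN; rewrite leq_maxr.
have n0 : 0 < (N%:R : R) by rewrite ltr0n.
have [hi h0 h1 h2 [a4 [h4 ha4]]] := hmom N N0.
have [_ hb] := int_bound fc hM hK hi h0 h1 h2 h4.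
rewrite distrC; apply: (le_trans hb).
have k1 : K * (a4 - 1) <= K * (B / N%:R).
  by apply: ler_wpM2l => //; lra.
have k2 : K * (B / N%:R) <= eps / 2.
  rewrite mulrA ler_pdivrMr //.
  move: NX; rewrite /X ltr_pdivrMr //; lra.
lra.
Qed.
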